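(* Consider a signal–idler system of one bosonic signal mode $S$ and one bosonic idler mode $I$, with quadrature vector ${\bf R}=(q_S,p_S,q_I,p_I)^\top$, commutation relations $[R_i,R_j]=\mathrm{i}\Omega_{ij}$ with ${\bf \Omega}=\mathbb{I}_2\otimes(\mathrm{i}\sigma_y)$, covariance matrix $\Sigma_{ij}=\frac12\langle R_iR_j+R_jR_i\rangle-\langle R_i\rangle\langle R_j\rangle$ and first-moment vector $d_i=\langle R_i\rangle$. The signal is sent through the thermal lossy channel, which maps ${\bf d}=[{\bf d}_S^\top,{\bf d}_I^\top]^\top\mapsto[\eta{\bf d}_S^\top,{\bf d}_I^\top]^\top$ and ${\bf \Sigma}=\begin{bmatrix}{\bf \Sigma}_S & {\bf \Sigma}_{SI}\\ {\bf \Sigma}_{SI}^\top & {\bf \Sigma}_I\end{bmatrix}\mapsto\begin{bmatrix}\eta^2{\bf \Sigma}_S+y(\eta)\mathbb{I}_2 & \eta{\bf \Sigma}_{SI}\\ \eta{\bf \Sigma}_{SI}^\top & {\bf \Sigma}_I\end{bmatrix}$, with $y(\eta)=(1-\eta^2)(N_B+\frac12)$. Then, for the purpose of estimating $\eta$, the covariance matrix and first-moment vector of a generic input state of this channel (with a single-mode idler) can be canonically expressed as \begin{align*} {\bf d}=\begin{bmatrix} q \\ p \\ 0\\0\end{bmatrix},\quad {\bf \Sigma}=\begin{bmatrix} a{\bf S}(r) & {\bf R}(\phi){\bf C}\\ [{\bf R}(\phi){\bf C}]^\top & b\mathbb{I}_2\end{bmatrix}, \end{align*} where ${\bf S}(r)={\rm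 diag}(r,r^{-1})$, ${\bf R}(\phi)=\begin{bmatrix}\cos\phi & -\sin\phi\\ \sin\phi & \cos\phi\end{bmatrix}$, ${\bf C}={\rm diag}(c_+,c_-)$. Here all parameters are real and respect the constraints given by the Heisenberg relation ${\bf \Sigma}+\mathrm{i}{\bf \Omega}/2\succeq0$.
   Context: The reduction is without loss of generality because the channel commutes with any rotation applied to the signal and any symplectic (Gaussian unitary) transformation applied to the idler, so these can be applied to the input without changing the information about $\eta$. $N_B\geq0$ is the mean thermal photon number of the bath and $\eta$ is the lossy transmission parameter. *)

(* Defs.v *)
From HB Require Import structures.
From mathcomp Require Import all_boot all_order all_algebra.
From mathcomp Require Import all_classical all_reals.
From mathcomp Require Import trigo.
From mathcomp Require Import complex.
Set Implicit Arguments. Unset Strict Implicit. Unset Printing Implicit Defensive.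
Import Order.TTheory GRing.Theory Num.Theory.
Local Open Scope ring_scope.

Section Defs.
Variable R : realType.

Definition mx2 (a b c d : R) : 'M[R]_2 :=
  \matrix_(i < 2, j < 2)
    (if i == 0 :> nat then (if j == 0 :> nat then a else b)
                      else (if j == 0 :> nat then c else d)).

Definition col2 (x y : R) : 'cV[R]_2 :=
  \col_(i < 2) (if i == 0 :> nat then x else y).

Definition iSy : 'M[R]_2 := mx2 0 1 (-1) 0.

(* Omega = I_2 (x) (i sigma_y), quadrature ordering (q_S,p_S,q_I,p_I). *)
Definition Omega : 'M[R]_(2 + 2) := block_mx iSy 0 0 iSy.

Definition Smx (r : R) : 'M[R]_2 := mx2 r 0 0 r^-1.
Definition Rot (phi : R) : 'M[R]_2 := mx2 (cos phi) (- sin phi) (sin phi) (cos phi).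
Definition Cmx (cp cm : R) : 'M[R]_2 := mx2 cp 0 0 cm.

Definition symplectic2 (S : 'M[R]_2) : Prop := S *m iSy *m S^T = iSy.

Definition cmx m n (A : 'M[R]_(m, n)) : 'M[R[i]]_(m, n) :=
  map_mx (fun x : R => (x%:C)%C) A.

Definition adj m n (A : 'M[R[i]]_(m, n)) : 'M[R[i]]_(n, m) := (map_mx conjc A)^T.

Definition psd n (M : 'M[R[i]]_n) : Prop :=
  forall z : 'cV[R[i]]_n, 0 <= (adj z *m M *m z) 0 0.

Definition heisenberg (Sigma : 'M[R]_(2 + 2)) : Prop :=
  psd (cmx Sigma + (('i)%C / 2%:R) *: cmx Omega).

Definition yfun (NB eta : R) : R := (1 - eta ^+ 2) * (NB + 2%:R^-1).

Definition chan_d (eta : R) (d : 'cV[R]_(2 + 2)) : 'cV[R]_(2 + 2) :=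
  col_mx (eta *: usubmx d) (dsubmx d).

Definition chan_Sigma (NB eta : R) (Sigma : 'M[R]_(2 + 2)) : 'M[R]_(2 + 2) :=
  block_mx (eta ^+ 2 *: ulsubmx Sigma + yfun NB eta *: 1%:M) (eta *: ursubmx Sigma)
           (eta *: dlsubmx Sigma) (drsubmx Sigma).

(* local Gaussian unitary: rotation R(theta) on the signal, symplectic SI on the
   idler, plus idler displacement delta:  d |-> G d + e,  Sigma |-> G Sigma G^T *)
Definition Gloc (theta : R) (SI : 'M[R]_2) : 'M[R]_(2 + 2) :=
  block_mx (Rot theta) 0 0 SI.
Definition eloc (delta : 'cV[R]_2) : 'cV[R]_(2 + 2) := col_mx 0 delta.

Definition d_canon (q p : R) : 'cV[R]_(2 + 2) := col_mx (col2 q p) 0.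
Definition Sigma_canon (a r phi cp cm b : R) : 'M[R]_(2 + 2) :=
  block_mx (a *: Smx r) (Rot phi *m Cmx cp cm)
           (Rot phi *m Cmx cp cm)^T (b *: 1%:M).

End Defs.

(* Main.v *)
Require Import Defs.
From HB Require Import structures.
From mathcomp Require Import all_boot all_order all_algebra.
From mathcomp Require Import all_classical all_reals.
From mathcomp Require Import trigo.
From mathcomp Require Import complex.
From mathcomp Require Import ring lra.
Import Order.TTheory GRing.Theory Num.Theory.
Local Open Scope ring_scope.

Section S.
Variable R : realType.

Lemma mx2E (A : 'M[R]_2) : A = mx2 (A 0 0) (A 0 1) (A 1 0) (A 1 1).
Proof.
by apply/matrixP=> i j; rewrite !mxE; case: i => [[|[|//]] Hi]; case: j => [[|[|//]] Hj];
  congr (A _ _); apply/val_inj.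
Qed.

Lemma mx2_mul a b c d e f g h :
  mx2 a b c d *m mx2 e f g h = mx2 (a*e + b*g) (a*f+b*h) (c*e+d*g) (c*f+d*h) :> 'M[R]_2.
Proof.
apply/matrixP=> i j; rewrite !mxE !big_ord_recl big_ord0 !mxE /=.
by case: i => [[|[|//]] Hi]; case: j => [[|[|//]] Hj]; rewrite /= addr0.
Qed.

Lemma mx2_tr a b c d : (mx2 a b c d)^T = mx2 a c b d :> 'M[R]_2.
Proof.
by apply/matrixP=> i j; rewrite !mxE; case: i => [[|[|//]] Hi]; case: j => [[|[|//]] Hj].
Qed.

Lemma mx2_eq a b c d e f g h : a = e -> b = f -> c = g -> d = h ->
  mx2 a b c d = mx2 e f g h :> 'M[R]_2.
Proof. by move=> -> -> -> ->. Qed.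

Lemma mx2_scale k a b c d : k *: mx2 a b c d = mx2 (k*a) (k*b) (k*c) (k*d) :> 'M[R]_2.
Proof.
by apply/matrixP=> i j; rewrite !mxE; case: i => [[|[|//]] Hi]; case: j => [[|[|//]] Hj].
Qed.

Lemma mx2_add a b c d e f g h :
  mx2 a b c d + mx2 e f g h = mx2 (a+e) (b+f) (c+g) (d+h) :> 'M[R]_2.
Proof.
by apply/matrixP=> i j; rewrite !mxE; case: i => [[|[|//]] Hi]; case: j => [[|[|//]] Hj].
Qed.

Lemma mx2_1 : 1%:M = mx2 1 0 0 1 :> 'M[R]_2.
Proof.
by apply/matrixP=> i j; rewrite !mxE; case: i => [[|[|//]] Hi]; case: j => [[|[|//]] Hj].
Qed.

Lemma mx2_0 : 0 = mx2 0 0 0 0 :> 'M[R]_2.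
Proof.
by apply/matrixP=> i j; rewrite !mxE; case: i => [[|[|//]] Hi]; case: j => [[|[|//]] Hj].
Qed.

Lemma mx2_00 a b c d : mx2 a b c d 0 0 = a :> R. Proof. by rewrite mxE. Qed.
Lemma mx2_01 a b c d : mx2 a b c d 0 1 = b :> R. Proof. by rewrite mxE. Qed.
Lemma mx2_10 a b c d : mx2 a b c d 1 0 = c :> R. Proof. by rewrite mxE. Qed.
Lemma mx2_11 a b c d : mx2 a b c d 1 1 = d :> R. Proof. by rewrite mxE. Qed.

Lemma unit_angle x y : x ^+ 2 + y ^+ 2 = 1 -> exists t : R, cos t = x /\ sin t = y.
Proof.
move=> h.
have hx : -1 <= x <= 1.
  have : x ^+ 2 <= 1 by nra.
  by move=> h2; apply/andP; split; nra.
have hs : Num.sqrt (1 - x ^+ 2) = `|y|.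
  by rewrite -sqrtr_sqr; congr Num.sqrt; lra.
have [y0|y0] := lerP 0 y.
  exists (acos x); rewrite acosK ?in_itv //= sin_acos // hs ger0_norm //.
exists (- acos x); rewrite cosN sinN acosK ?in_itv //= sin_acos // hs ltr0_norm //.
by rewrite opprK.
Qed.

Lemma angle_perp p q : exists t : R, p * cos t + q * sin t = 0.
Proof.
have [h0|hn] := eqVneq (p ^+ 2 + q ^+ 2) 0.
  have hp : p = 0 by nra.
  have hq : q = 0 by nra.
  by exists 0; rewrite hp hq; ring.
have hpos : 0 < p ^+ 2 + q ^+ 2.
  by rewrite lt0r hn /=; nra.
set n := Num.sqrt (p ^+ 2 + q ^+ 2).
have hn0 : 0 < n by rewrite sqrtr_gt0.
have hn2 : n ^+ 2 = p ^+ 2 + q ^+ 2 by rewrite sqr_sqrtr // ltW.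
have [t [ht1 ht2]] : exists t : R, cos t = - q / n /\ sin t = p / n.
  apply: unit_angle. rewrite !expr_div_n sqrrN -mulrDl addrC -hn2 divff //.
  by rewrite expf_neq0 // gt_eqF.
exists t; rewrite ht1 ht2. field. by rewrite gt_eqF.
Qed.


Lemma Rot_mx2 (t : R) : Rot t = mx2 (cos t) (- sin t) (sin t) (cos t).
Proof. by []. Qed.

Lemma RotRotT (t : R) : Rot t *m (Rot t)^T = 1%:M.
Proof.
rewrite Rot_mx2 mx2_tr mx2_mul mx2_1; have h := cos2Dsin2 t.
apply: mx2_eq; rewrite -?h; ring.
Qed.

Lemma sympl_det (a b c d : R) : a * d - b * c = 1 -> symplectic2 (mx2 a b c d).
Proof.
move=> h; rewrite /symplectic2 /iSy !mx2_mul mx2_tr mx2_mul; apply: mx2_eq; nra.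
Qed.

Lemma sympl_Rot (t : R) : symplectic2 (Rot t).
Proof. rewrite Rot_mx2; apply: sympl_det; rewrite -(cos2Dsin2 t); ring. Qed.

Lemma sympl_mul (A B : 'M[R]_2) : symplectic2 A -> symplectic2 B -> symplectic2 (A *m B).
Proof.
rewrite /symplectic2 => hA hB; by rewrite trmx_mul !mulmxA -(mulmxA A B) -(mulmxA A (B *m _)) hB hA.
Qed.

Lemma diag_rot a b d : exists t x y : R,
  Rot t *m mx2 a b b d *m (Rot t)^T = mx2 x 0 0 y.
Proof.
have [s hs] := angle_perp b ((a - d) / 2).
set t := s / 2.
have st : s = t + t by rewrite /t; field.
move: hs; rewrite st cosD sinD => hs.
exists t; rewrite Rot_mx2 mx2_tr !mx2_mul.
eexists _, _; apply: mx2_eq; [reflexivity| | |reflexivity].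
- by apply: etrans hs; field.
- by apply: etrans hs; field.
Qed.

Lemma col_decomp m00 m01 m10 m11 : m00 * m01 + m10 * m11 = 0 ->
  exists phi cp cm : R, mx2 m00 m01 m10 m11 = Rot phi *m Cmx cp cm.
Proof.
move=> horth.
have [t [h1 h2]] : exists t : R, m10 * cos t = m00 * sin t /\ m01 * cos t + m11 * sin t = 0.
  have [hu|hu] := eqVneq (m00 ^+ 2 + m10 ^+ 2) 0.
    have e0 : m00 = 0 by nra.
    have e1 : m10 = 0 by nra.
    have [t ht] := angle_perp m01 m11.
    by exists t; rewrite e0 e1 !mul0r.
  have [t ht] := angle_perp (- m10) m00.
  exists t; split; first by lra.
  set w := m01 * cos t + m11 * sin t.
  have : w * (m00 ^+ 2 + m10 ^+ 2) = 0.
    have -> : w * (m00 ^+ 2 + m10 ^+ 2) = (m00 * m01 + m10 * m11) * (m00 * cos t + m10 * sin t)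
       + (m00 * m11 - m10 * m01) * (m00 * sin t - m10 * cos t) by rewrite /w; ring.
    rewrite horth (_ : m00 * sin t - m10 * cos t = 0); first by ring.
    lra.
  by move/eqP; rewrite mulf_eq0 (negbTE hu) orbF => /eqP.
have h := cos2Dsin2 t.
exists t, (m00 * cos t + m10 * sin t), (- m01 * sin t + m11 * cos t).
have E : cos t ^+ 2 + sin t ^+ 2 - 1 = 0 by rewrite h subrr.
have H1 : m10 * cos t - m00 * sin t = 0 by rewrite h1 subrr.
rewrite Rot_mx2 /Cmx mx2_mul; apply: mx2_eq; apply/eqP; rewrite -subr_eq0; apply/eqP.
- rewrite (_ : _ - _ = - m00 * (cos t ^+ 2 + sin t ^+ 2 - 1) - sin t * (m10 * cos t - m00 * sin t)); last by ring.
  by rewrite E H1; ring.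
- rewrite (_ : _ - _ = - m01 * (cos t ^+ 2 + sin t ^+ 2 - 1) + cos t * (m01 * cos t + m11 * sin t)); last by ring.
  by rewrite E h2; ring.
- rewrite (_ : _ - _ = - m10 * (cos t ^+ 2 + sin t ^+ 2 - 1) + cos t * (m10 * cos t - m00 * sin t)); last by ring.
  by rewrite E H1; ring.
- rewrite (_ : _ - _ = - m11 * (cos t ^+ 2 + sin t ^+ 2 - 1) + sin t * (m01 * cos t + m11 * sin t)); last by ring.
  by rewrite E h2; ring.
Qed.

End S.
Section S.
Variable R : realType.

Lemma cmxM m n p (A : 'M[R]_(m, n)) (B : 'M[R]_(n, p)) : cmx (A *m B) = cmx A *m cmx B.
Proof. exact: map_mxM. Qed.

Lemma cmxT m n (A : 'M[R]_(m, n)) : cmx A^T = (cmx A)^T.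
Proof. by apply/matrixP=> i j; rewrite !mxE. Qed.

Lemma conj_cmx m n (A : 'M[R]_(m, n)) : map_mx conjc (cmx A) = cmx A.
Proof. by apply/matrixP=> i j; rewrite !mxE conjc_real. Qed.

Lemma adjM m n p (A : 'M[R[i]]_(m, n)) (B : 'M[R[i]]_(n, p)) : adj (A *m B) = adj B *m adj A.
Proof. by rewrite /adj map_mxM trmx_mul. Qed.

Lemma heis_inv (G S : 'M[R]_(2 + 2)) : G *m Omega R *m G^T = Omega R ->
  heisenberg S -> heisenberg (G *m S *m G^T).
Proof.
move=> hG hS z.
rewrite /heisenberg -hG !cmxM !cmxT scalemxAl scalemxAr -mulmxDl -mulmxDr.
have -> : adj z *m (cmx G *m (cmx S + ('i%C / 2%:R) *: cmx (Omega R)) *m (cmx G)^T) *m z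
  = adj ((cmx G)^T *m z) *m (cmx S + ('i%C / 2%:R) *: cmx (Omega R)) *m ((cmx G)^T *m z).
  by rewrite adjM /adj -map_trmx trmxK conj_cmx !mulmxA.
exact: hS.
Qed.

End S.
Section S.
Variable R : realType.

Lemma half_i : ('i%C / 2%:R : R[i]) = (Complex 0 (2^-1)).
Proof.
apply/eqP; rewrite eq_complex /=; apply/andP; split; apply/eqP; by field.
Qed.

Lemma valc1 (x y w al : R) (mii mij mji mjj : R[i]) :
  mii = x%:C%C -> mij = y%:C%C + Complex 0 (2^-1) -> mji = y%:C%C - Complex 0 (2^-1) ->
  mjj = w%:C%C ->
  (1 : R[i])^*%C * (1 * mii + (al%:C%C * 'i%C) * mij)
  + ((al%:C%C * 'i%C)^*%C) * (1 * mji + (al%:C%C * 'i%C) * mjj)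
  = (x - al + al ^+ 2 * w)%:C%C.
Proof.
move=> -> -> -> ->.
apply/eqP; rewrite eq_complex /=; apply/andP; split; apply/eqP; by field.
Qed.

Lemma valc2 (x y w al : R) (mii mij mji mjj : R[i]) :
  mii = x%:C%C -> mij = y%:C%C + Complex 0 (2^-1) -> mji = y%:C%C - Complex 0 (2^-1) ->
  mjj = w%:C%C ->
  (al%:C%C * 'i%C)^*%C * ((al%:C%C * 'i%C) * mii + 1 * mij)
  + ((1 : R[i])^*%C) * ((al%:C%C * 'i%C) * mji + 1 * mjj)
  = (al ^+ 2 * x + al + w)%:C%C.
Proof.
move=> -> -> -> ->.
apply/eqP; rewrite eq_complex /=; apply/andP; split; apply/eqP; by field.
Qed.

Lemma sum2 n (i j : 'I_n) (a b : R[i]) (f : 'I_n -> R[i]) : i != j ->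
  \sum_k (if k == i then a else if k == j then b else 0) * f k = a * f i + b * f j.
Proof.
move=> ij; rewrite (bigD1 i) //= eqxx (bigD1 j) /=; last by rewrite eq_sym.
rewrite eq_sym (negbTE ij) eqxx big1 ?addr0 // => k /andP[ki kj].
by rewrite (negbTE ki) (negbTE kj) mul0r.
Qed.

Lemma form2 n (M : 'M[R[i]]_n) (i j : 'I_n) (a b : R[i]) : i != j ->
  let z := \col_k (if k == i then a else if k == j then b else 0) in
  (adj z *m M *m z) 0 0 = a^*%C * (a * M i i + b * M i j) + b^*%C * (a * M j i + b * M j j).
Proof.
move=> ij z; rewrite mxE.
under eq_bigr => l _ do rewrite mxE [z l 0]mxE.
under eq_bigr => l _ do under eq_bigr => k _ do rewrite /adj !mxE.
have e : forall k, (if k == i then a else if k == j then b else 0)^*%C =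
   (if k == i then a^*%C else if k == j then b^*%C else 0).
  by move=> k; case: ifP => // _; case: ifP => // _; rewrite conjc0.
under eq_bigr => l _ do under eq_bigr => k _ do rewrite e.
under eq_bigr => l _ do rewrite sum2 //.
rewrite (eq_bigr (fun l => (if l == i then a else if l == j then b else 0) *
   (a^*%C * M i l + b^*%C * M j l))); last by move=> l _; rewrite mulrC.
rewrite sum2 //; ring.
Qed.


Lemma heis_pos (S : 'M[R]_(2 + 2)) (i j : 'I_(2 + 2)) : i != j ->
  Omega R i i = 0 -> Omega R j j = 0 -> Omega R i j = 1 -> Omega R j i = -1 ->
  S j i = S i j -> heisenberg S -> 0 < S i i /\ 0 < S j j.
Proof.
move=> ij hii hjj hij hji hs hH.
set M := cmx S + ('i%C / 2%:R) *: cmx (Omega R).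
have Mkl : forall k l, M k l = (S k l)%:C%C + ('i%C / 2%:R) * (Omega R k l)%:C%C.
  by move=> k l; rewrite !mxE.
have e1 : M i i = (S i i)%:C%C by rewrite Mkl hii rmorph0 mulr0 addr0.
have e2 : M j j = (S j j)%:C%C by rewrite Mkl hjj rmorph0 mulr0 addr0.
have e3 : M i j = (S i j)%:C%C + Complex 0 (2^-1) by rewrite Mkl hij rmorph1 mulr1 half_i.
have e4 : M j i = (S i j)%:C%C - Complex 0 (2^-1) by rewrite Mkl hs hji rmorphN1 mulrN1 half_i.
have q1 : forall al, 0 <= S i i - al + al ^+ 2 * S j j.
  move=> al; have := hH (\col_k (if k == i then 1 else if k == j then (al%:C * 'i)%C else 0)).
  by rewrite form2 // (valc1 _ _ _ al _ _ _ _ e1 e3 e4 e2) ler0c.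
have q2 : forall al, 0 <= al ^+ 2 * S i i + al + S j j.
  move=> al; have := hH (\col_k (if k == i then (al%:C * 'i)%C else if k == j then 1 else 0)).
  by rewrite form2 // (valc2 _ _ _ al _ _ _ _ e1 e3 e4 e2) ler0c.
have x0 : 0 <= S i i by have := q1 0; rewrite expr0n /= mul0r subr0 addr0.
have w0 : 0 <= S j j by have := q2 0; rewrite expr0n /= mul0r addr0 add0r.
split.
- have := q1 (S j j + 1)^-1.
  set x := S i i; set w := S j j => h.
  have hw : 0 < w + 1 by rewrite /w; lra.
  have : (w + 1)^-1 - (w + 1)^-1 ^+ 2 * w = (w + 1)^-1 ^+ 2.
    by field; rewrite gt_eqF.
  have : 0 < (w + 1)^-1 ^+ 2 by rewrite exprn_gt0 // invr_gt0.
  move: h; set v := (w + 1)^-1; set v2 := v ^+ 2; lra.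
- have := q2 (- (S i i + 1)^-1).
  set x := S i i; set w := S j j => h.
  have hw : 0 < x + 1 by rewrite /x; lra.
  have : (x + 1)^-1 ^+ 2 * x - (x + 1)^-1 = - (x + 1)^-1 ^+ 2.
    by field; rewrite gt_eqF.
  have : 0 < (x + 1)^-1 ^+ 2 by rewrite exprn_gt0 // invr_gt0.
  move: h; rewrite sqrrN; set v := (x + 1)^-1; set v2 := v ^+ 2; lra.
Qed.

End S.
Section M.
Variable R : realType.

Lemma conj_block (P Q A B C D : 'M[R]_2) :
  block_mx P 0 0 Q *m block_mx A B C D *m (block_mx P 0 0 Q)^T =
  block_mx (P *m A *m P^T) (P *m B *m Q^T) (Q *m C *m P^T) (Q *m D *m Q^T).
Proof.
by rewrite tr_block_mx !trmx0 !mulmx_block !mulmx0 !mul0mx !addr0 !add0r.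
Qed.

Lemma Om_ul (a b : 'I_2) : Omega R (lshift 2 a) (lshift 2 b) = iSy R a b.
Proof. by rewrite /Omega block_mxEul. Qed.
Lemma Om_dr (a b : 'I_2) : Omega R (rshift 2 a) (rshift 2 b) = iSy R a b.
Proof. by rewrite /Omega block_mxEdr. Qed.

Lemma GOmega (P Q : 'M[R]_2) : symplectic2 P -> symplectic2 Q ->
  block_mx P 0 0 Q *m Omega R *m (block_mx P 0 0 Q)^T = Omega R.
Proof.
move=> hP hQ; rewrite {2}/Omega conj_block !mulmx0 !mul0mx.
by rewrite hP hQ.
Qed.

Lemma pos_blocks (S : 'M[R]_(2 + 2)) l1 l2 m1 m2 (X Y : 'M[R]_2) :
  S^T = S -> heisenberg S -> S = block_mx (mx2 l1 0 0 l2) X Y (mx2 m1 0 0 m2) ->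
  [/\ 0 < l1, 0 < l2, 0 < m1 & 0 < m2].
Proof.
move=> hs hH eS.
have sym : forall i j, S j i = S i j by move=> i j; rewrite -{1}hs mxE.
have [h1 h2] := @heis_pos R S (lshift 2 0) (lshift 2 1) isT
   ltac:(by rewrite Om_ul /iSy mx2_00) ltac:(by rewrite Om_ul /iSy mx2_11)
   ltac:(by rewrite Om_ul /iSy mx2_01) ltac:(by rewrite Om_ul /iSy mx2_10) (sym _ _) hH.
have [h3 h4] := @heis_pos R S (rshift 2 0) (rshift 2 1) isT
   ltac:(by rewrite Om_dr /iSy mx2_00) ltac:(by rewrite Om_dr /iSy mx2_11)
   ltac:(by rewrite Om_dr /iSy mx2_01) ltac:(by rewrite Om_dr /iSy mx2_10) (sym _ _) hH.
move: h1 h2 h3 h4; rewrite eS !block_mxEul !block_mxEdr !mx2_00 !mx2_11.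
by move=> *; split.
Qed.

End M.

Arguments mx2E {R}. Arguments mx2_tr {R}. Arguments mx2_mul {R}. Arguments mx2_1 {R}.
Arguments mx2_eq {R}. Arguments mx2_scale {R}. Arguments mx2_00 {R}. Arguments mx2_01 {R}.
Arguments mx2_10 {R}. Arguments mx2_11 {R}. Arguments Rot_mx2 {R}. Arguments RotRotT {R}.
Arguments sympl_det {R}. Arguments sympl_Rot {R}. Arguments sympl_mul {R}.
Arguments diag_rot {R}. Arguments col_decomp {R}. Arguments heis_inv {R}.
Arguments conj_block {R}. Arguments GOmega {R}. Arguments pos_blocks {R}.

Theorem lemma7 (R : realType) (NB : R) (hNB : 0 <= NB)
    (d : 'cV[R]_(2 + 2)) (Sigma : 'M[R]_(2 + 2))
    (hsym : Sigma^T = Sigma) (hH : heisenberg Sigma) :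
  exists (theta : R) (SI : 'M[R]_2) (delta : 'cV[R]_2),
    symplectic2 SI /\
    (forall eta : R,
        chan_d eta (Gloc theta SI *m d + eloc delta)
          = Gloc theta SI *m chan_d eta d + eloc delta /\
        chan_Sigma NB eta (Gloc theta SI *m Sigma *m (Gloc theta SI)^T)
          = Gloc theta SI *m chan_Sigma NB eta Sigma *m (Gloc theta SI)^T) /\
    exists q p a r phi cp cm b : R,
      0 < r /\
      Gloc theta SI *m d + eloc delta = d_canon q p /\
      Gloc theta SI *m Sigma *m (Gloc theta SI)^T = Sigma_canon a r phi cp cm b /\
      heisenberg (Sigma_canon a r phi cp cm b).
Proof.
set A := ulsubmx Sigma; set B := ursubmx Sigma; set D := drsubmx Sigma.
have hC : dlsubmx Sigma = B^T by rewrite /B trmx_ursub hsym.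
have hA : A^T = A by rewrite /A trmx_ulsub hsym.
have hD : D^T = D by rewrite /D trmx_drsub hsym.
have eA : A = mx2 (A 0 0) (A 0 1) (A 0 1) (A 1 1).
  have e10 : A 1 0 = A 0 1 by rewrite -{1}hA mxE.
  by rewrite {1}(mx2E A) e10.
have eD : D = mx2 (D 0 0) (D 0 1) (D 0 1) (D 1 1).
  have e10 : D 1 0 = D 0 1 by rewrite -{1}hD mxE.
  by rewrite {1}(mx2E D) e10.
have hSig : Sigma = block_mx A B B^T D by rewrite -hC submxK.
have [th [l1 [l2 hth]]] := diag_rot (A 0 0) (A 0 1) (A 1 1).
have [t2 [m1 [m2 ht2]]] := diag_rot (D 0 0) (D 0 1) (D 1 1).
rewrite -eA in hth; rewrite -eD in ht2.
have [l1p l2p m1p m2p] : [/\ 0 < l1, 0 < l2, 0 < m1 & 0 < m2].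
  set G1 := block_mx (Rot th) 0 0 (Rot t2).
  apply: (pos_blocks (G1 *m Sigma *m G1^T) l1 l2 m1 m2
            (Rot th *m B *m (Rot t2)^T) (Rot t2 *m B^T *m (Rot th)^T)).
  - by rewrite !trmx_mul trmxK hsym mulmxA.
  - by apply: heis_inv => //; apply: GOmega; apply: sympl_Rot.
  - by rewrite hSig /G1 conj_block hth ht2.
set k := Num.sqrt (m2 / m1).
have kp : 0 < k by rewrite sqrtr_gt0 divr_gt0.
have hk2 : k ^+ 2 * m1 = m2.
  by rewrite sqr_sqrtr ?divr_ge0 ?ltW // mulfVK // gt_eqF.
set s := Num.sqrt k.
have sp : 0 < s by rewrite sqrtr_gt0.
have hs2 : s ^+ 2 = k by rewrite sqr_sqrtr // ltW.
set Dg := mx2 s 0 0 s^-1.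
have hDg : Dg *m mx2 m1 0 0 m2 *m Dg^T = (k * m1) *: 1%:M.
  rewrite /Dg mx2_tr !mx2_mul mx2_1 mx2_scale; apply: mx2_eq.
  - by rewrite -hs2; ring.
  - by ring.
  - by ring.
  - by rewrite -hk2 -hs2; field; rewrite gt_eqF.
set M1 := Rot th *m B *m (Dg *m Rot t2)^T.
set N := M1^T *m M1.
have hN : N^T = N by rewrite /N trmx_mul trmxK.
have eN : N = mx2 (N 0 0) (N 0 1) (N 0 1) (N 1 1).
  have e10 : N 1 0 = N 0 1 by rewrite -{1}hN mxE.
  by rewrite {1}(mx2E N) e10.
have [t3 [n1 [n2 ht3]]] := diag_rot (N 0 0) (N 0 1) (N 1 1).
rewrite -eN in ht3.
set M2 := M1 *m (Rot t3)^T.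
have hM2 : M2^T *m M2 = mx2 n1 0 0 n2.
  by rewrite -ht3 /M2 /N !trmx_mul !trmxK !mulmxA.
have horth : M2 0 0 * M2 0 1 + M2 1 0 * M2 1 1 = 0.
  have := congr1 (fun X : 'M[R]_2 => X 0 1) hM2.
  by rewrite /= {1 2}(mx2E M2) mx2_tr mx2_mul !mx2_01.
have [phi [cp [cm hM2e]]] := col_decomp _ _ _ _ horth.
rewrite -mx2E in hM2e.
set SI := Rot t3 *m (Dg *m Rot t2).
have hSI : symplectic2 SI.
  apply: sympl_mul; first exact: sympl_Rot.
  apply: sympl_mul; last exact: sympl_Rot.
  by apply: sympl_det; rewrite mulfV ?gt_eqF // mulr0 subr0.
exists th, SI, (- (SI *m dsubmx d)).
split; first exact: hSI.
split.
  move=> eta; split.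
  - rewrite /chan_d /Gloc /eloc -[d](vsubmxK d) !(mul_block_col, mul0mx, addr0, add0r,
      add_col_mx, col_mxKu, col_mxKd).
    by rewrite scalemxAr.
  - rewrite /chan_Sigma /Gloc -[Sigma](submxK Sigma) !conj_block.
    rewrite !(block_mxKul, block_mxKur, block_mxKdl, block_mxKdr).
    rewrite mulmxDr mulmxDl -!scalemxAr -!scalemxAl mulmx1 RotRotT.
    by [].
set r := Num.sqrt (l1 / l2).
have rp : 0 < r by rewrite sqrtr_gt0 divr_gt0.
have hr2 : r ^+ 2 = l1 / l2 by rewrite sqr_sqrtr // ltW // divr_gt0.
have hul : Rot th *m A *m (Rot th)^T = (l1 / r) *: Smx r.
  rewrite hth /Smx mx2_scale; apply: mx2_eq.
  - by field; rewrite gt_eqF.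
  - by ring.
  - by ring.
  - rewrite -mulrA -invfM -expr2 hr2; field; rewrite ?gt_eqF //.
have hur : Rot th *m B *m SI^T = Rot phi *m Cmx cp cm.
  by rewrite -hM2e /M2 /M1 /SI trmx_mul !mulmxA.
have hdl : SI *m B^T *m (Rot th)^T = (Rot phi *m Cmx cp cm)^T.
  by rewrite -hur !trmx_mul !trmxK /SI !mulmxA.
have hdr : SI *m D *m SI^T = (k * m1) *: 1%:M.
  have -> : SI *m D *m SI^T = Rot t3 *m (Dg *m (Rot t2 *m D *m (Rot t2)^T) *m Dg^T) *m (Rot t3)^T.
    by rewrite /SI !trmx_mul !mulmxA.
  by rewrite ht2 hDg -scalemxAr mulmx1 -scalemxAl RotRotT.
have hcanon : Gloc th SI *m Sigma *m (Gloc th SI)^T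
    = Sigma_canon (l1 / r) r phi cp cm (k * m1).
  by rewrite /Gloc /Sigma_canon hSig conj_block hul hur hdl hdr.
exists ((Rot th *m usubmx d) 0 0), ((Rot th *m usubmx d) 1 0), (l1 / r), r, phi, cp, cm, (k * m1).
split; first exact: rp.
split.
  rewrite /Gloc /eloc /d_canon -{1}(vsubmxK d) mul_block_col !mul0mx !addr0 !add0r add_col_mx.
  rewrite addr0 addrN; congr col_mx.
  apply/matrixP=> i j; rewrite [RHS]mxE (ord1 j).
  by case: i => [[|[|//]] Hi] /=; congr (_ _ _); apply: val_inj.
split; first exact: hcanon.
rewrite -hcanon; apply: heis_inv => //.
by apply: GOmega => //; apply: sympl_Rot.
Qed.
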